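(* For any pair of search/learning algorithms $\mathcal{A}_1$, $\mathcal{A}_2$ operating on discrete finite search space $\Omega$, any closed under permutation set of target sets $\tau$, any set of information resources $\mathcal{B}$, and decomposable probability-of-success metric $\phi$, \[ \sum_{t\in\tau}\sum_{f\in\mathcal{B}} \phi_{\mathcal{A}_1}(t,f) = \sum_{t\in\tau}\sum_{f\in\mathcal{B}} \phi_{\mathcal{A}_2}(t,f). \]
   Context: Algorithmic search framework: a finite discrete search space $\Omega$, a nonempty target set $t\subseteq\Omega$ (with target function/indicator vector $\mathbf{t}\in\{0,1\}^{|\Omega|}$), and an external information resource $f$. A black-box iterative algorithm $\mathcal{A}$ produces, at each step, a probability distribution over $\Omega$ from which it samples, using $f$ and the search history. A probability-of-success metric $\phi$ is decomposable if there exists a probability vector $\mathbf{P}_{\phi,f}$ over $\Omega$ (not a function of $t$, conditionally independent of it given $f$) with $\phi(t,f)=\mathbf{t}^{\top}\mathbf{P}_{\phi,f}=P_\phi(X\in t\mid f)$. $\phi_{\mathcal{A}}(t,f)$ denotes the metric for algorithm $\mathcal{A}$. A set of target sets is closed under permutation if it is closed under permutations of the elements of $\Omega$. *)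

(* Defs.v *)
From mathcomp Require Import all_boot all_order all_algebra all_fingroup.
Set Implicit Arguments. Unset Strict Implicit. Unset Printing Implicit Defensive.
Import Order.TTheory GRing.Theory Num.Theory.
Local Open Scope ring_scope.

Definition prob_vec (R : numDomainType) (Omega : finType) (p : Omega -> R) : Prop :=
  (forall x, 0 <= p x) /\ \sum_(x : Omega) p x = 1.

(* A probability-of-success metric phi (for a fixed algorithm), as a function
   of the target set t and the information resource f, is decomposable if
   there is, for each f, a probability vector P_{phi,f} over Omega (not
   depending on t) with phi(t,f) = t^T P_{phi,f} = \sum_{x in t} P_{phi,f}(x). *)
Definition decomposable (R : numDomainType) (Omega : finType) (F : Type)
    (phi : {set Omega} -> F -> R) : Prop :=
  exists P : F -> Omega -> R,
    (forall f, prob_vec (P f)) /\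
    (forall (t : {set Omega}) (f : F), phi t f = \sum_(x in t) P f x).

Definition closed_under_perm (Omega : finType) (tau : {set {set Omega}}) : Prop :=
  forall (s : {perm Omega}) (t : {set Omega}), t \in tau -> (s @: t) \in tau.

(* Main.v *)
Require Import Defs.
From mathcomp Require Import all_boot all_order all_algebra all_fingroup.
Import GRing.Theory Num.Theory.
Local Open Scope ring_scope.

Section Aux.
Variables (R : realFieldType) (Omega : finType) (tau : {set {set Omega}}).
Hypothesis Htau : closed_under_perm tau.

Definition cnt (x : Omega) := #|[set t in tau | x \in t]|.

Lemma cnt_le x y : (cnt x <= cnt y)%N.
Proof.
rewrite /cnt.
have inj : injective (fun t : {set Omega} => (tperm x y) @: t).
  by apply: imset_inj; apply: perm_inj.
rewrite -(card_imset _ inj); apply: subset_leq_card.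
apply/subsetP => u /imsetP [t]; rewrite inE => /andP [tt xt] ->.
rewrite inE Htau //=.
by apply/imsetP; exists x => //; rewrite tpermL.
Qed.

Lemma cnt_const x y : cnt x = cnt y.
Proof. by apply/eqP; rewrite eqn_leq !cnt_le. Qed.

Lemma key (P : Omega -> R) (x0 : Omega) : prob_vec P ->
  \sum_(t in tau) \sum_(x in t) P x = (cnt x0)%:R.
Proof.
move=> [_ HP].
transitivity (\sum_(t in tau) \sum_x (if x \in t then P x else 0)).
  by apply: eq_bigr => t _; rewrite big_mkcond.
rewrite exchange_big /=.
transitivity (\sum_x P x * (cnt x0)%:R); last by rewrite -mulr_suml HP mul1r.
apply: (@eq_bigr R 0 +%R) => x _.
rewrite -(cnt_const x) /cnt -sum1_card natr_sum mulr_sumr.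
rewrite [RHS]big_mkcond [LHS]big_mkcond /=; apply: eq_bigr => t _.
rewrite inE; case: (t \in tau); case: (x \in t); by rewrite /= ?mulr1.
Qed.
End Aux.

Theorem theorem1 (R : realFieldType) (Omega : finType) (F : eqType)
    (tau : {set {set Omega}}) (B : seq F)
    (phi1 phi2 : {set Omega} -> F -> R) :
  set0 \notin tau ->
  closed_under_perm tau ->
  uniq B ->
  decomposable phi1 ->
  decomposable phi2 ->
  \sum_(t in tau) \sum_(f <- B) phi1 t f = \sum_(t in tau) \sum_(f <- B) phi2 t f.
Proof.
move=> _ Htau _ [P1 [HP1 E1]] [P2 [HP2 E2]].
rewrite (exchange_big _ _ B) [RHS](exchange_big _ _ B) /=.
apply: eq_bigr => f _.
case: (pickP (fun _ : Omega => true)) => [x0 _|none].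
  under eq_bigr do rewrite E1.
  under [RHS]eq_bigr do rewrite E2.
  by rewrite ((@key R Omega tau Htau (P1 f) x0 (HP1 f))) ((@key R Omega tau Htau (P2 f) x0 (HP2 f))).
exfalso; case: (HP1 f) => _; rewrite big_pred0 //.
by move=> /esym/eqP; rewrite oner_eq0.
Qed.
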